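(* Let $R$ be a commutative Noetherian ring with unity, $\lambda$ a length function on $R$-modules, $S=R[x_1,\dots,x_k]$, $A$ an $S$-module and $\bar A=(A_i)_{i\in\mathbb{N}}$ a $\lambda$-inert filtration of $A$. Then there is a polynomial $\tilde q_{\bar A}(t)\in\mathbb{R}[t]$ of degree at most $k-1$ such that $\lambda(\tilde A_n)=\tilde q_{\bar A}(n)$ for all sufficiently large $n\in\mathbb{N}$.
   Context: A length function on $R$-modules is a function $\lambda$ from $R$-modules to $\mathbb{R}_{\ge0}\cup\{\infty\}$ with $\lambda(0)=0$, invariant under isomorphism, additive on short exact sequences, and with $\lambda(N)=\sup\{\lambda(N'):N'\le N$ finitely generated$\}$. A filtration of $A$ is an increasing sequence of $R$-submodules $A_0\le A_1\le\dots$ with $\bigcup A_i=A$ and $x_jA_i\subseteq A_{i+1}$ for all $i,j$. Put $\tilde A_i=A_{i+1}/A_i$ and let $\tilde{\mathcal B}(\bar A)=\bigoplus_{i\in\mathbb{N}}\tilde A_i$, the graded $S$-module in which each $x_j$ acts with degree $1$ (induced maps $\tilde A_i\to\tilde A_{i+1}$). The filtration is $\lambda$-inert if $\tilde{\mathcal B}(\bar A)$ is a Noetherian $S$-module and there is $n_0$ with $\lambda(\tilde A_n)<\infty$ for all $n\ge n_0$. *)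

(* Defs.v *)
From HB Require Import structures.
From mathcomp Require Import all_boot all_algebra generic_quotient.
From mathcomp Require Import classical_sets boolp reals constructive_ereal ereal.
From mathcomp Require Import Rstruct.

Set Implicit Arguments.
Unset Strict Implicit.
Unset Printing Implicit Defensive.

Import GRing.Theory.
Local Open Scope ring_scope.
Local Open Scope quotient_scope.
Local Open Scope classical_set_scope.

Notation Rreal := Rdefinitions.R.

Section NoetherianRing.
Variable R : comPzRingType.

Definition is_ideal (I : {pred R}) : Prop :=
  zmod_closed I /\ (forall a x, x \in I -> a * x \in I).

Definition noetherian_ring : Prop :=
  forall I : nat -> {pred R}, (forall n, is_ideal (I n)) ->
    (forall n, {subset I n <= I n.+1}) ->
    exists N, forall n, (N <= n)%N -> I n =i I N.
End NoetherianRing.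

(* Subquotient modules B / (B ∩ C) of an R-module V, for submodules   *)
(* B, C of V (when C ⊆ B this is the usual quotient B / C).            *)
Module SubQuot.
Section SubQuot.
Variables (R : pzRingType) (V : lmodType R) (B C : {pred V}).
Hypotheses (hB : submod_closed B) (hC : submod_closed C).

Lemma mem0 (S : {pred V}) : submod_closed S -> 0 \in S.
Proof. by case. Qed.
Lemma memD (S : {pred V}) u v : submod_closed S -> u \in S -> v \in S -> u + v \in S.
Proof. by case=> _ h Su Sv; have := h 1 u v Su Sv; rewrite scale1r. Qed.
Lemma memZ (S : {pred V}) a u : submod_closed S -> u \in S -> a *: u \in S.
Proof. by case=> S0 h Su; have := h a u 0 Su S0; rewrite addr0. Qed.
Lemma memN (S : {pred V}) u : submod_closed S -> u \in S -> - u \in S.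
Proof. by move=> hS Su; rewrite -scaleN1r memZ. Qed.
Lemma memB (S : {pred V}) u v : submod_closed S -> u \in S -> v \in S -> u - v \in S.
Proof. by move=> hS Su Sv; rewrite memD // memN. Qed.

Definition base : Type := let _ := hB in {x : V | x \in B}.

Definition zeroT : base := exist _ 0 (mem0 hB).
Definition addT (x y : base) : base :=
  exist _ (val x + val y) (memD hB (valP x) (valP y)).
Definition oppT (x : base) : base := exist _ (- val x) (memN hB (valP x)).
Definition scaleT (a : R) (x : base) : base :=
  exist _ (a *: val x) (memZ a hB (valP x)).

Definition equiv (x y : base) : bool := (val x - val y) \in C.

Lemma equiv_is_equiv : equiv_class_of equiv.
Proof.
split=> [x|x y|y x z]; rewrite /equiv ?subrr ?(mem0 hC) //.
  by apply/idP/idP => h; rewrite -opprB memN.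
by move=> *; rewrite -[val x](addrNK (val y)) -addrA memD.
Qed.

Canonical equiv_equiv := EquivRelPack equiv_is_equiv.
Canonical equiv_encModRel := defaultEncModRel equiv.

Definition quot := {eq_quot equiv}.
HB.instance Definition _ : EqQuotient base equiv quot := EqQuotient.on quot.
HB.instance Definition _ := Choice.on quot.

Lemma equivP x y : equiv x y = (x == y %[mod quot]).
Proof. by rewrite piE. Qed.

Lemma reprE x : val (repr (\pi_quot x)) - val x \in C.
Proof. by have := equivP (repr (\pi_quot x)) x; rewrite reprK eqxx. Qed.

Definition zero : quot := \pi zeroT.
Definition add := lift_op2 quot addT.
Definition opp := lift_op1 quot oppT.
Definition scale a := lift_op1 quot (scaleT a).

Lemma pi_opp x : \pi_quot (oppT x) = opp (\pi x).
Proof.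
unlock opp; apply/eqP; rewrite -equivP /equiv /=.
by rewrite -opprD opprB; exact: reprE.
Qed.

Lemma pi_add x y : \pi_quot (addT x y) = add (\pi x) (\pi y).
Proof.
unlock add; apply/eqP; rewrite -equivP /equiv /=.
have h := memD hC (reprE x) (reprE y).
by rewrite -opprB memN // opprD addrACA.
Qed.

Lemma pi_scale a x : \pi_quot (scaleT a x) = scale a (\pi x).
Proof.
unlock scale; apply/eqP; rewrite -equivP /equiv /=.
by rewrite -scalerBr memZ // -opprB memN // reprE.
Qed.

Lemma addqA : associative add.
Proof.
move=> x y z; rewrite -[x]reprK -[y]reprK -[z]reprK -!pi_add.
by congr \pi; apply: val_inj; rewrite /= addrA.
Qed.
Lemma addqC : commutative add.
Proof.
move=> x y; rewrite -[x]reprK -[y]reprK -!pi_add.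
by congr \pi; apply: val_inj; rewrite /= addrC.
Qed.
Lemma add0q : left_id zero add.
Proof.
move=> x; rewrite -[x]reprK /zero -!pi_add.
by congr \pi; apply: val_inj; rewrite /= add0r.
Qed.
Lemma addNq : left_inverse zero opp add.
Proof.
move=> x; rewrite -[x]reprK /zero -pi_opp -!pi_add.
by congr \pi; apply: val_inj; rewrite /= addNr.
Qed.

HB.instance Definition _ := GRing.isZmodule.Build quot addqA addqC add0q addNq.

Lemma addE (u v : quot) : u + v = add u v. Proof. by []. Qed.

Lemma scaleqA a b v : scale a (scale b v) = scale (a * b) v.
Proof.
rewrite -[v]reprK -!pi_scale.
by congr \pi; apply: val_inj; rewrite /= scalerA.
Qed.
Lemma scaleq1 : left_id 1 scale.
Proof.
move=> v; rewrite -[v]reprK -!pi_scale.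
by congr \pi; apply: val_inj; rewrite /= scale1r.
Qed.
Lemma scaleqDr : right_distributive scale +%R.
Proof.
move=> a x y; rewrite /= !addE -[x]reprK -[y]reprK -!pi_add -!pi_scale -pi_add.
by congr \pi; apply: val_inj; rewrite /= scalerDr.
Qed.
Lemma scaleqDl v : {morph scale^~ v : a b / a + b}.
Proof.
move=> a b; rewrite /= !addE -[v]reprK -!pi_scale -pi_add.
by congr \pi; apply: val_inj; rewrite /= scalerDl.
Qed.

HB.instance Definition _ :=
  GRing.Zmodule_isLmodule.Build R quot scaleqA scaleq1 scaleqDr scaleqDl.

(* class of v in B/(B ∩ C) if v \in B, and 0 otherwise *)
Definition cls (v : V) : quot := \pi_quot (insubd zeroT v : base).
Definition rep (u : quot) : V := val (repr u).

End SubQuot.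
End SubQuot.
Export SubQuot.

Definition subquot (R : pzRingType) (V : lmodType R) (B C : {pred V})
  (hB : submod_closed B) (hC : submod_closed C) : lmodType R :=
  @SubQuot.quot R V B C hB hC.

Lemma submod_closed0 (R : pzRingType) (V : lmodType R) :
  submod_closed [pred x : V | x == 0].
Proof.
split; first by rewrite inE.
by move=> a u v; rewrite !inE => /eqP-> /eqP->; rewrite scaler0 addr0.
Qed.

Definition fg_submodule (R : pzRingType) (N : lmodType R) (N' : {pred N}) : Prop :=
  exists s : seq N, forall v : N,
    v \in N' <-> exists c : 'I_(size s) -> R, v = \sum_(i < size s) c i *: s`_i.

Record length_function (R : pzRingType) := LengthFunction {
  lenf :> forall M : lmodType R, \bar Rreal;
  lenf_ge0 : forall M, (0 <= lenf M)%E;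
  lenf0 : forall M : lmodType R, (forall x : M, x = 0) -> lenf M = 0%E;
  lenf_iso : forall (M N : lmodType R) (f : {linear M -> N}),
      bijective f -> lenf M = lenf N;
  lenf_ses : forall (M1 M2 M3 : lmodType R)
      (f : {linear M1 -> M2}) (g : {linear M2 -> M3}),
      injective f -> (forall z, exists y, g y = z) ->
      (forall y, g y = 0 <-> exists x, f x = y) ->
      lenf M2 = (lenf M1 + lenf M3)%E;
  lenf_sup : forall N : lmodType R,
      lenf N = ereal_sup [set l | exists (N' : {pred N}) (hN' : submod_closed N'),
                 fg_submodule N' /\ l = lenf (subquot hN' (submod_closed0 N))]
}.

(* S-modules, S = R[x_1, ..., x_k], encoded as R-modules A with k     *)
(* pairwise commuting R-linear endomorphisms xs j (the action of x_j). *)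
Section Filtration.
Variables (R : comPzRingType) (k : nat) (A : lmodType R).
Variable xs : 'I_k -> {linear A -> A}.

Definition commuting_ops : Prop :=
  forall i j (a : A), xs i (xs j a) = xs j (xs i a).

(* filtration: increasing, exhaustive, x_j A_i ⊆ A_{i+1}; that each A_i is
   a submodule is the separate hypothesis hA below *)
Definition is_filtration (Af : nat -> {pred A}) : Prop :=
  [/\ forall i, {subset Af i <= Af i.+1},
      forall a : A, exists i, a \in Af i
    & forall i (j : 'I_k) a, a \in Af i -> xs j a \in Af i.+1].

Variables (Af : nat -> {pred A}) (hA : forall i, submod_closed (Af i)).

Definition gr (i : nat) : lmodType R := subquot (hA i.+1) (hA i).

Definition gr_x (j : 'I_k) (i : nat) (u : gr i) : gr i.+1 :=
  SubQuot.cls (hA i.+2) (hA i.+1) (xs j (SubQuot.rep u)).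

(* elements of (the ambient product of) \tilde B(\bar A) = ⊕_i \tilde A_i *)
Definition grseq := forall i, gr i.

Definition fin_supp (g : grseq) : Prop := exists N, forall i, (N <= i)%N -> g i = 0.

Definition grseq_x (j : 'I_k) (g : grseq) : grseq :=
  fun i => match i return gr i with 0 => 0 | i'.+1 => gr_x j (g i') end.

Definition gr_Ssubmodule (P : set grseq) : Prop :=
  [/\ forall g, P g -> fin_supp g,
      P (fun i => 0),
      forall g h, P g -> P h -> P (fun i => g i + h i),
      forall (a : R) g, P g -> P (fun i => a *: g i)
    & forall j g, P g -> P (grseq_x j g)].

Definition gr_noetherian : Prop :=
  forall P : nat -> set grseq, (forall n, gr_Ssubmodule (P n)) ->
    (forall n, P n `<=` P n.+1) -> exists N, forall n, (N <= n)%N -> P n = P N.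

Definition lambda_inert (lam : length_function R) : Prop :=
  gr_noetherian /\ exists n0, forall n, (n0 <= n)%N -> (lam (gr n) < +oo)%E.

End Filtration.

(* Main.v *)
Require Import Defs.
From HB Require Import structures.
From mathcomp Require Import all_boot all_algebra.
From mathcomp Require Import classical_sets boolp reals constructive_ereal ereal.
From mathcomp Require Import Rstruct.
From mathcomp Require Import all_order generic_quotient ring.
Local Open Scope ring_scope.

Module Helpers.
Set Implicit Arguments.
Unset Strict Implicit.
Unset Printing Implicit Defensive.
Import GRing.Theory Num.Theory Order.TTheory.

Section SQ.
Variables (R : pzRingType) (V : lmodType R) (B C : {pred V}).
Hypotheses (hB : submod_closed B) (hC : submod_closed C).
Local Open Scope quotient_scope.
Local Notation Q := (subquot hB hC).
Local Notation cls := (SubQuot.cls hB hC).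
Local Notation rep := (@SubQuot.rep R V B C hB hC).

Lemma rep_in (u : Q) : rep u \in B.
Proof. exact: valP. Qed.

Lemma cls_rep (u : Q) : cls (rep u) = u.
Proof. by rewrite /SubQuot.cls /SubQuot.rep valKd reprK. Qed.

Lemma rep_cls v : v \in B -> rep (cls v) - v \in C.
Proof.
move=> vB; have := @SubQuot.reprE R V B C hB hC (insubd (SubQuot.zeroT hB) v).
by rewrite insubdK.
Qed.

Lemma cls_eq v w : v \in B -> w \in B -> (cls v = cls w) <-> (v - w \in C).
Proof.
move=> vB wB; rewrite /SubQuot.cls; split.
  by move/eqP; rewrite -SubQuot.equivP /SubQuot.equiv !insubdK.
by move=> h; apply/eqP; rewrite -SubQuot.equivP /SubQuot.equiv !insubdK.
Qed.

Lemma cls0 : cls 0 = 0.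
Proof. 
rewrite /SubQuot.cls; congr \pi; apply: val_inj; rewrite insubdK //.
exact: SubQuot.mem0.
Qed.

Lemma clsD v w : v \in B -> w \in B -> cls (v + w) = cls v + cls w.
Proof.
move=> vB wB; rewrite /SubQuot.cls.
set x := insubd _ v; set y := insubd _ w.
have -> : \pi_(SubQuot.quot hB hC) x + \pi y = @SubQuot.add R V B C hB hC (\pi x) (\pi y) by [].
rewrite -SubQuot.pi_add.
congr \pi; apply: val_inj; rewrite /= !insubdK //; exact: SubQuot.memD.
Qed.

Lemma clsZ a v : v \in B -> cls (a *: v) = a *: cls v.
Proof.
move=> vB; rewrite /SubQuot.cls.
set x := insubd _ v.
have -> : a *: \pi_(SubQuot.quot hB hC) x =
   @SubQuot.scale R V B C hB hC a (\pi x) by [].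
rewrite -SubQuot.pi_scale.
congr \pi; apply: val_inj; rewrite /= !insubdK //; exact: SubQuot.memZ.
Qed.

Lemma cls_eq0 v : v \in B -> (cls v = 0) <-> (v \in C).
Proof.
move=> vB; rewrite -cls0 cls_eq ?subr0 //; exact: SubQuot.mem0.
Qed.

Lemma Q_eq0 (u : Q) : (u = 0) <-> (rep u \in C).
Proof. by rewrite -{1}(cls_rep u) cls_eq0 // rep_in. Qed.

End SQ.

Section Ind.
Variables (R : pzRingType) (V W : lmodType R) (phi : {linear V -> W}).
Variables (B C : {pred V}) (B' C' : {pred W}).
Hypotheses (hB : submod_closed B) (hC : submod_closed C).
Hypotheses (hB' : submod_closed B') (hC' : submod_closed C').
Hypotheses (phiB : forall v, v \in B -> phi v \in B')
           (phiC : forall v, v \in C -> phi v \in C').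

Definition indf (u : subquot hB hC) : subquot hB' hC' :=
  SubQuot.cls hB' hC' (phi (SubQuot.rep u)).

Lemma indf_cls v : v \in B -> indf (SubQuot.cls hB hC v) = SubQuot.cls hB' hC' (phi v).
Proof.
move=> vB; rewrite /indf; apply/cls_eq; rewrite ?phiB ?rep_in //.
by rewrite -linearB phiC // rep_cls.
Qed.

Lemma indf_linear : linear indf.
Proof.
move=> a u w.
rewrite -(cls_rep u) -(cls_rep w) -clsZ ?rep_in // -clsD ?rep_in ?SubQuot.memZ //.
rewrite !indf_cls ?rep_in ?SubQuot.memD ?SubQuot.memZ ?rep_in //.
rewrite linearP clsD ?clsZ //; rewrite ?SubQuot.memZ ?phiB ?rep_in //. all: exact: rep_in.
Qed.

Definition indL : {linear subquot hB hC -> subquot hB' hC'} :=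
  HB.pack indf (GRing.isLinear.Build _ _ _ _ indf indf_linear).

End Ind.


Lemma bij_of (T U : Type) (f : T -> U) :
  injective f -> (forall z, exists y, f y = z) -> bijective f.
Proof.
move=> fi fs; pose g z := proj1_sig (cid (fs z)).
exists g => [x|z]; last exact: (proj2_sig (cid (fs z))).
by apply: fi; rewrite /g; case: (cid _).
Qed.

Section Lam.
Variables (R : pzRingType) (lam : length_function R).

Lemma lam_triv (V : lmodType R) (B C : {pred V}) (hB : submod_closed B)
  (hC : submod_closed C) : {subset B <= C} -> lam (subquot hB hC) = 0%E.
Proof.
move=> BC; apply: lenf0 => u; apply/Q_eq0; apply: BC; exact: rep_in.
Qed.

Lemma lam_nested (V : lmodType R) (B D C : {pred V}) (hB : submod_closed B)
  (hD : submod_closed D) (hC : submod_closed C) :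
  {subset C <= D} -> {subset D <= B} ->
  lam (subquot hB hC) = (lam (subquot hD hC) + lam (subquot hB hD))%E.
Proof.
move=> CD DB.
pose f := indL (phi := (idfun : {linear V -> V})) hD hC hB hC DB (fun v h => h).
pose g := indL (phi := (idfun : {linear V -> V})) hB hC hB hD (fun v h => h) CD.
apply: (@lenf_ses _ lam _ _ _ f g).
- move=> u w /= /cls_eq; rewrite /= => h.
  rewrite -(cls_rep u) -(cls_rep w); apply/cls_eq; try exact: rep_in.
  by apply: h; apply: (DB _); exact: rep_in.
- move=> z; exists (SubQuot.cls hB hC (SubQuot.rep z)).
  rewrite /= /indf /= -[RHS]cls_rep; apply/cls_eq; try exact: rep_in.
  + apply: (CD _); apply: rep_cls; exact: rep_in.
- move=> y; split.
  + rewrite /= /indf /= => /cls_eq0 => h.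
    have yD : SubQuot.rep y \in D by apply: h; exact: rep_in.
    exists (SubQuot.cls hD hC (SubQuot.rep y)).
    rewrite /= /indf /= -[RHS]cls_rep; apply/cls_eq; try exact: rep_in.
    * by apply: (DB _); exact: rep_in.
    * apply: rep_cls; exact: yD.
  + case=> x <-; rewrite /= /indf /=; apply/cls_eq0; first exact: rep_in.
    have := rep_cls hB hC (DB _ (rep_in x)); rewrite -/(SubQuot.rep _) => h.
    rewrite -[X in X \in D](subrK (SubQuot.rep x)).
    apply: SubQuot.memD => //; [exact: (CD _) | exact: rep_in].
Qed.

Lemma lam_mono (V : lmodType R) (B D C : {pred V}) (hB : submod_closed B)
  (hD : submod_closed D) (hC : submod_closed C) :
  {subset C <= D} -> {subset D <= B} ->
  (lam (subquot hD hC) <= lam (subquot hB hC))%E.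
Proof.
move=> CD DB; rewrite (lam_nested hB hD hC CD DB) leeDl //; exact: lenf_ge0.
Qed.

Lemma lam_iso (V W : lmodType R) (phi : {linear V -> W}) (B K : {pred V})
  (E C' : {pred W}) (hB : submod_closed B) (hK : submod_closed K)
  (hE : submod_closed E) (hC' : submod_closed C') :
  (forall v, v \in K = (v \in B) && (phi v \in C')) ->
  (forall w, w \in E <-> exists c b, [/\ c \in C', b \in B & w = c + phi b]) ->
  lam (subquot hB hK) = lam (subquot hE hC').
Proof.
move=> Kdef Edef.
have phiB v : v \in B -> phi v \in E.
  by move=> vB; apply/Edef; exists 0, v; rewrite add0r; split=> //; exact: SubQuot.mem0.
have phiK v : v \in K -> phi v \in C' by rewrite Kdef => /andP[].
apply: (@lenf_iso _ lam _ _ (indL (phi := phi) hB hK hE hC' phiB phiK)); apply: bij_of.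
- move=> u w /= /cls_eq; rewrite /= => h.
  rewrite -(cls_rep u) -(cls_rep w); apply/cls_eq; try exact: rep_in.
  rewrite Kdef linearB /= h ?phiB ?rep_in // andbT.
  by apply: SubQuot.memB => //; exact: rep_in.
- move=> z; have /Edef [c [b [cC bB ez]]] := rep_in z.
  exists (SubQuot.cls hB hK b); rewrite /= -[RHS]cls_rep /indf /=.
  apply/cls_eq; [apply: phiB; exact: rep_in | exact: rep_in |].
  rewrite ez.
  have := rep_cls hB hK bB; rewrite Kdef => /andP[_].
  rewrite linearB /= => h.
rewrite opprD addrA addrAC.
  exact: SubQuot.memB.
Qed.

End Lam.

Lemma lam_mono2 (R : pzRingType) (lam : length_function R) (V : lmodType R)
  (B D C : {pred V}) (hB : submod_closed B)
  (hD : submod_closed D) (hC : submod_closed C) :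
  {subset C <= D} -> {subset D <= B} ->
  (lam (subquot hB hD) <= lam (subquot hB hC))%E.
Proof.
move=> CD DB; rewrite (lam_nested lam hB hD hC CD DB) leeDr //; exact: lenf_ge0.
Qed.

Section PolyAux.
Variable F : numFieldType.

Lemma antidiff k (p : {poly F}) : (size p <= k)%N ->
  exists Q : {poly F}, (size Q <= k.+1)%N /\ forall x, Q.[x + 1] - Q.[x] = p.[x].
Proof.
elim: k p => [|k IH] p sp.
  move: sp; rewrite size_poly_leq0 => /eqP ->.
  by exists 0; rewrite size_poly0; split=> // x; rewrite !horner0 subrr.
pose D : {poly F} := \poly_(i < k.+1) ('C(k.+1, i))%:R.
have Dx x : D.[x] = (x + 1) ^+ k.+1 - x ^+ k.+1.
  rewrite horner_poly exprD1n [in RHS]big_ord_recr /= binn mulr1n addrK.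
  by apply: eq_bigr => i _; rewrite mulr_natl.
pose d := p`_k / (k.+1)%:R.
pose p' := p - d *: D.
have sp' : (size p' <= k)%N.
  apply/leq_sizeP => j hj; rewrite coefB coefZ coef_poly.
  move: hj; rewrite leq_eqVlt => /orP[/eqP <-|hj].
    by rewrite ltnSn binSn /d mulfVK ?subrr // ?pnatr_eq0.
  by rewrite ltnNge hj /= mulr0 subr0; move/leq_sizeP: sp; apply.
have [Q' [sQ' hQ']] := IH p' sp'.
exists (Q' + d *: 'X^(k.+1)); split.
  apply: leq_trans (size_polyD _ _) _; rewrite geq_max (leq_trans sQ') //.
  by apply: leq_trans (size_scale_leq _ _) _; rewrite size_polyXn.
move=> x; rewrite !hornerD !hornerZ !hornerXn.
have := hQ' x; rewrite /p' hornerD hornerN hornerZ Dx => h.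
rewrite -[p.[x]](subrK (d * ((x + 1) ^+ k.+1 - x ^+ k.+1))) -h.
by ring.
Qed.

Lemma shift_poly (p : {poly F}) : exists q : {poly F},
  size q = size p /\ forall x, q.[x] = p.[x + 1].
Proof.
exists (p \Po ('X + 1%:P)); split; first by rewrite size_comp_poly2 // size_XaddC.
by move=> x; rewrite horner_comp hornerD hornerX hornerC.
Qed.

End PolyAux.

Section Gen.
Variables (R : pzRingType) (A : lmodType R).

Definition closedF k (xs : 'I_k -> {linear A -> A}) (D : nat -> {pred A}) :=
  forall i j a, a \in D i -> xs j a \in D i.+1.

Definition ACC k (xs : 'I_k -> {linear A -> A}) (B C : nat -> {pred A}) :=
  forall Dn : nat -> nat -> {pred A}, (forall n i, submod_closed (Dn n i)) ->
  (forall n i, {subset C i <= Dn n i}) -> (forall n i, {subset Dn n i <= B i}) ->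
  (forall n, closedF xs (Dn n)) -> (forall n i, {subset Dn n i <= Dn n.+1 i}) ->
  exists N, forall n, (N <= n)%N -> forall i, Dn n i =i Dn N i.

Lemma ord_split k (j : 'I_k.+1) :
  j = ord_max \/ exists j' : 'I_k, j = widen_ord (leqnSn k) j'.
Proof.
have [h|h] := ltnP j k.
  by right; exists (Ordinal h); apply: val_inj.
by left; apply: val_inj => /=; apply/eqP; rewrite eqn_leq h -ltnS ltn_ord.
Qed.

Lemma submod_K (x : {linear A -> A}) (B C : {pred A}) :
  submod_closed B -> submod_closed C ->
  submod_closed [pred v | (v \in B) && (x v \in C)].
Proof.
move=> hB hC; split.
  by rewrite inE SubQuot.mem0 //= linear0 SubQuot.mem0.
move=> a u v; rewrite !inE => /andP[uB uC] /andP[vB vC].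
rewrite SubQuot.memD ?SubQuot.memZ //= linearP.
by rewrite SubQuot.memD ?SubQuot.memZ.
Qed.

Definition Csum (x : {linear A -> A}) (B C : {pred A}) : {pred A} :=
  [pred w | `[< exists c b, [/\ c \in C, b \in B & w = c + x b] >] ].

Lemma CsumP (x : {linear A -> A}) (B C : {pred A}) w :
  w \in Csum x B C <-> exists c b, [/\ c \in C, b \in B & w = c + x b].
Proof. by rewrite inE. Qed.

Lemma submod_Csum (x : {linear A -> A}) (B C : {pred A}) :
  submod_closed B -> submod_closed C -> submod_closed (Csum x B C).
Proof.
move=> hB hC; split.
  apply/CsumP; exists 0, 0; split; rewrite ?SubQuot.mem0 //.
  by rewrite linear0 addr0.
move=> a u v /CsumP[c [b [cC bB ->]]] /CsumP[c' [b' [cC' bB' ->]]].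
apply/CsumP; exists (a *: c + c'), (a *: b + b'); split.
- by rewrite SubQuot.memD ?SubQuot.memZ.
- by rewrite SubQuot.memD ?SubQuot.memZ.
- by rewrite linearP scalerDr addrACA.
Qed.


Lemma fin_of (y z : \bar Rdefinitions.R) : (0 <= y)%E -> (y <= z)%E -> (z < +oo)%E ->
  y = (fine y)%:E.
Proof.
case: y => [r _ _ _|_ h1 h2|//]; first by [].
by have := le_lt_trans h1 h2; rewrite ltxx.
Qed.

Lemma clos_all k (xs : 'I_k.+1 -> {linear A -> A}) (D : nat -> {pred A}) :
  closedF (fun j : 'I_k => xs (widen_ord (leqnSn k) j)) D ->
  (forall i a, a \in D i -> xs ord_max a \in D i.+1) -> closedF xs D.
Proof.
move=> h1 h2 i j a aD; case: (ord_split j) => [->|[j' ->]]; first exact: h2.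
exact: h1.
Qed.

Variable lam : length_function R.

Theorem gen k : forall (xs : 'I_k -> {linear A -> A}),
  (forall i j a, xs i (xs j a) = xs j (xs i a)) ->
  forall (B C : nat -> {pred A}) (hB : forall i, submod_closed (B i))
    (hC : forall i, submod_closed (C i)),
  (forall i, {subset C i <= B i}) -> closedF xs B -> closedF xs C ->
  ACC xs B C ->
  (exists n0, forall n, (n0 <= n)%N -> (lam (subquot (hB n) (hC n)) < +oo)%E) ->
  exists q : {poly Rdefinitions.R}, (size q <= k)%N /\
    exists N, forall n, (N <= n)%N -> lam (subquot (hB n) (hC n)) = (q.[n%:R])%:E.
Proof.
elim: k => [|k IH] xs hxs B C hB hC CB clB clC acc [n0 fin].
  pose Dn n i := if (i < n)%N then B i else C i.
  have [N hN] : exists N, forall n, (N <= n)%N -> forall i, Dn n i =i Dn N i.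
    apply: acc.
    - by move=> n i; rewrite /Dn; case: ifP.
    - by move=> n i v; rewrite /Dn; case: ifP => // _; exact: CB.
    - by move=> n i v; rewrite /Dn; case: ifP => // _; exact: CB.
    - by move=> n i [m hm].
    - move=> n i v; rewrite /Dn; case: (ltnP i n) => h.
        by rewrite ltnS (ltnW h).
      by case: ifP => // _; exact: CB.
  exists 0; split; first by rewrite size_poly0.
  exists N => n hn.
  rewrite horner0; apply: (lam_triv lam) => v vB.
  have := hN n.+1 (leq_trans hn (leqnSn n)) n v.
  by rewrite /Dn ltnSn ltnNge hn /= => <-.

pose x := xs ord_max.
pose xs' (j : 'I_k) := xs (widen_ord (leqnSn k) j).
have hxs' : forall i j a, xs' i (xs' j a) = xs' j (xs' i a) by move=> *; exact: hxs.
pose K i := [pred v | (v \in B i) && (x v \in C i.+1)].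
pose C' i := match i with 0 => C 0 | i'.+1 => Csum x (B i') (C i'.+1) end.
have hK i : submod_closed (K i) := submod_K x (hB i) (hC i.+1).
have hC' i : submod_closed (C' i).
  by case: i => [|i]; [exact: hC | exact: submod_Csum].
have CK i : {subset C i <= K i}.
  move=> v vC; rewrite inE CB //=; exact: clC.
have KB i : {subset K i <= B i} by move=> v; rewrite inE => /andP[].
have CC' i : {subset C i <= C' i}.
  case: i => [|i] v vC //=; apply/CsumP; exists v, 0.
  by rewrite linear0 addr0; split=> //; exact: SubQuot.mem0.
have C'B i : {subset C' i <= B i}.
  case: i => [|i] v /=; first exact: CB.
  move/CsumP=> [c [b [cC bB ->]]]; apply: SubQuot.memD => //; first exact: CB.
  exact: clB.
have clB' : closedF xs' B by move=> i j a; exact: clB.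
have clC' : closedF xs' C by move=> i j a; exact: clC.
have clK : closedF xs' K.
  move=> i j a; rewrite !inE => /andP[aB aC].
  rewrite clB //= /x hxs; exact: clC.
have clC'' : closedF xs' C'.
  move=> i j a; case: i => [|i] /=.
    by move=> aC; apply: (CC' 1); exact: clC.
  move/CsumP=> [c [b [cC bB ->]]]; apply/CsumP.
  exists (xs' j c), (xs' j b); split; [exact: clC | exact: clB |].
  by rewrite linearD /x /xs' hxs.
have accK : ACC xs' K C.
  move=> Dn sD CD DK clD mon; apply: acc => //.
    by move=> n i v /DK /KB.
  move=> n; apply: clos_all => // i a /DK; rewrite inE => /andP[_ h].
  exact: CD.
have accC' : ACC xs' B C'.
  move=> Dn sD CD DB clD mon; apply: acc => //.
    by move=> n i v /CC' /CD.
  move=> n; apply: clos_all => // i a aD; apply: CD => /=; apply/CsumP.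
  exists 0, a; split; rewrite ?add0r //; [exact: SubQuot.mem0 | exact: (DB _ _ _ aD)].
have finK : exists n1, forall n, (n1 <= n)%N -> (lam (subquot (hK n) (hC n)) < +oo)%E.
  exists n0 => n hn; apply: le_lt_trans (fin n hn).
  exact: (lam_mono lam (hB n) (hK n) (hC n) (CK n) (KB n)).
have finC' : exists n1, forall n, (n1 <= n)%N -> (lam (subquot (hB n) (hC' n)) < +oo)%E.
  exists n0 => n hn; apply: le_lt_trans (fin n hn).
  exact: (lam_mono2 lam (hB n) (hC' n) (hC n) (CC' n) (C'B n)).
have [p2 [sp2 [N2 h2]]] := IH xs' hxs' K C hK hC CK clK clC' accK finK.
have [p1 [sp1 [N1 h1]]] := IH xs' hxs' B C' hB hC' C'B clB' clC'' accC' finC'.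
have [p1s [sp1s hp1s]] := shift_poly p1.
pose p := p1s - p2.
have sp : (size p <= k)%N.
  by apply: leq_trans (size_polyD _ _) _; rewrite size_polyN geq_max sp1s sp1 sp2.
have [Q [sQ hQ]] := antidiff sp.
pose M := maxn n0 (maxn N1 N2).
have n0M : (n0 <= M)%N by rewrite leq_maxl.
have N1M : (N1 <= M)%N by rewrite /M maxnCA leq_maxl.
have N2M : (N2 <= M)%N by rewrite /M maxnA leq_maxr.
pose f n := fine (lam (subquot (hB n) (hC n))).
have fE n : (M <= n)%N -> lam (subquot (hB n) (hC n)) = (f n)%:E.
  move=> hn; apply: (@fin_of _ (lam (subquot (hB n) (hC n)))) => //.
    exact: lenf_ge0.
  exact: fin (leq_trans n0M hn).
have step n : (M <= n)%N -> f n.+1 - f n = p.[n%:R].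
  move=> hn.
  have Eq1 := lam_nested lam (hB n) (hK n) (hC n) (CK n) (KB n).
  have Eq2 := @lam_iso _ lam _ _ x (B n) (K n) (C' n.+1) (C n.+1) (hB n) (hK n)
     (hC' n.+1) (hC n.+1) (fun v => erefl _) (fun w => CsumP x (B n) (C n.+1) w).
  have Eq3 := lam_nested lam (hB n.+1) (hC' n.+1) (hC n.+1) (CC' n.+1) (C'B n.+1).
  set y := lam (subquot (hB n) (hK n)) in Eq1 Eq2.
  have yE : y = (fine y)%:E.
    apply: (@fin_of _ (lam (subquot (hB n) (hC n)))).
    - exact: lenf_ge0.
    - exact: (lam_mono2 lam (hB n) (hK n) (hC n) (CK n) (KB n)).
    - exact: fin (leq_trans n0M hn).
  have hn1 : (M <= n.+1)%N := leq_trans hn (leqnSn n).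
  rewrite -Eq2 yE (h1 n.+1 (leq_trans N1M hn1)) (fE n.+1 hn1) in Eq3.
  rewrite yE (h2 n (leq_trans N2M hn)) (fE n hn) in Eq1.
  move: Eq1 Eq3; rewrite -!EFinD => -[e1] [e3].
  rewrite e1 e3 /p hornerD hornerN hp1s -natr1.
  by ring.
have fQ n : (M <= n)%N -> f n = Q.[n%:R] + (f M - Q.[M%:R]).
  move=> hn; rewrite -(subnKC hn); elim: (n - M)%N => [|m IHm].
    by rewrite addn0 addrC subrK.
  have := step (M + m)%N (leq_addr _ _); rewrite addnS => h.
  rewrite -[f _](subrK (f (M + m)%N)) h IHm -hQ -natr1.
  by ring.
exists (Q + (f M - Q.[M%:R])%:P); split.
  apply: leq_trans (size_polyD _ _) _; rewrite geq_max sQ /=.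
  by apply: leq_trans (size_polyC_leq1 _) _.
exists M => n hn; rewrite fE // hornerD hornerC fQ //.
Qed.

End Gen.

Section SQ2.
Variables (R : pzRingType) (V : lmodType R) (B C : {pred V}).
Hypotheses (hB : submod_closed B) (hC : submod_closed C).

Lemma rep_add (u w : subquot hB hC) :
  SubQuot.rep (u + w) - (SubQuot.rep u + SubQuot.rep w) \in C.
Proof.
have h : SubQuot.cls hB hC (SubQuot.rep (u + w)) =
   SubQuot.cls hB hC (SubQuot.rep u + SubQuot.rep w).
  by rewrite clsD ?cls_rep //; exact: rep_in.
move/cls_eq: h; apply; first exact: rep_in.
by apply: SubQuot.memD => //; exact: rep_in.
Qed.

Lemma rep_scale a (u : subquot hB hC) :
  SubQuot.rep (a *: u) - a *: SubQuot.rep u \in C.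
Proof.
have h : SubQuot.cls hB hC (SubQuot.rep (a *: u)) =
   SubQuot.cls hB hC (a *: SubQuot.rep u).
  by rewrite clsZ ?cls_rep //; exact: rep_in.
move/cls_eq: h; apply; first exact: rep_in.
by apply: SubQuot.memZ => //; exact: rep_in.
Qed.

Lemma rep0 : SubQuot.rep (0 : subquot hB hC) \in C.
Proof. by apply/Q_eq0. Qed.

End SQ2.

Lemma memDC (R : pzRingType) (V : lmodType R) (D : {pred V}) (hD : submod_closed D) u v :
  u - v \in D -> v \in D -> u \in D.
Proof. by move=> h1 h2; rewrite -(subrK v u); exact: SubQuot.memD. Qed.


End Helpers.
Import Helpers.
Import GRing.Theory.

Theorem proposition11p2 (R : comPzRingType) (hR : noetherian_ring R)
    (lam : length_function R) (k : nat) (A : lmodType R)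
    (xs : 'I_k -> {linear A -> A}) (hxs : commuting_ops xs)
    (Af : nat -> {pred A}) (hA : forall i, submod_closed (Af i))
    (hfil : is_filtration xs Af) (hinert : lambda_inert xs hA lam) :
  exists q : {poly Rdefinitions.R}, (size q <= k)%N /\
    exists N : nat, forall n : nat, (N <= n)%N ->
      lam (gr hA n) = (q.[n%:R])%:E.
Proof.
case: hfil => inc _ clx.
case: hinert => noeth fin.
have CB i : {subset Af i <= Af i.+1} by exact: inc.
have clB : closedF xs (fun i => Af i.+1) by move=> i j a; exact: clx.
have clC : closedF xs Af by move=> i j a; exact: clx.
have acc : ACC xs (fun i => Af i.+1) Af.
  move=> Dn sD CD DB clD mon.
  pose P n : set (grseq hA) :=
    fun g => fin_supp g /\ forall i, SubQuot.rep (g i) \in Dn n i.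
  have [N hN] : exists N, forall n, (N <= n)%N -> P n = P N.
    apply: noeth.
      move=> n; split.
      - by move=> g [].
      - split; first by exists 0%N.
        move=> i; apply: CD; exact: (rep0 (hA i.+1) (hA i)).
      - move=> g h [[Ng hg] gD] [[Nh hh] hD]; split.
          exists (maxn Ng Nh) => i hi.
          rewrite hg ?hh ?addr0 //; apply: leq_trans hi; 
            [exact: leq_maxr | exact: leq_maxl].
        move=> i; apply: (memDC (sD n i)).
          apply: CD; exact: (rep_add (g i) (h i)).
        by apply: SubQuot.memD.
      - move=> a g [[Ng hg] gD]; split.
          by exists Ng => i hi; rewrite hg // scaler0.
        move=> i; apply: (memDC (sD n i)).
          apply: CD; exact: (rep_scale a (g i)).
        by apply: SubQuot.memZ.
      - move=> j g [[Ng hg] gD]; split.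
          exists Ng.+1 => -[|i] hi //=.
          rewrite /gr_x hg //; apply/cls_eq0.
            by apply: clx; apply: CB; exact: (rep0 (hA i.+1) (hA i)).
          by apply: clx; exact: (rep0 (hA i.+1) (hA i)).
        case=> [|i] /=.
          apply: CD; exact: (rep0 (hA 1) (hA 0)).
        rewrite /gr_x; apply: (memDC (sD n i.+1)).
          apply: CD; apply: rep_cls; apply: clx; exact: rep_in.
        exact: clD.
    by move=> n g [fg gD]; split => // i; apply: mon.
  have key m m' : P m = P m' -> forall i v, v \in Dn m i -> v \in Dn m' i.
    move=> e i v vD.
    have vB : v \in Af i.+1 := DB _ _ _ vD.
    pose g : grseq hA := fun l => if l == i then SubQuot.cls (hA l.+1) (hA l) v else 0.
    have : P m g.
      split.
        exists i.+1 => l hl; rewrite /g; case: eqP => // el.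
        by subst l; rewrite ltnn in hl.
      move=> l; rewrite /g; case: eqP => [el|_].
        subst l; apply: (memDC (sD m i)) vD; apply: CD.
        exact: rep_cls.
      apply: CD; exact: (rep0 (hA l.+1) (hA l)).
    rewrite e => -[_ /(_ i)]; rewrite /g eqxx => h.
    apply: (memDC (sD m' i)) h; apply: CD.
    rewrite -opprB; apply: SubQuot.memN => //; exact: rep_cls.
  exists N => n hn i v; apply/idP/idP; first exact: key (hN n hn) i v.
  exact: key (esym (hN n hn)) i v.
have := @gen R A lam k xs hxs (fun i => Af i.+1) Af (fun i => hA i.+1) hA CB clB clC acc fin.
exact.
Qed.
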